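(* Let $I=\{a,b\}$ with positive integers $a<b$. The sequence $(C_0(I),\ldots,C_{s(I)}(I))$ of Naruse-Newton coefficients of $I$ is log-concave if and only if $I$ is one of $\{1,2\}$, $\{1,3\}$, $\{2,3\}$, $\{2,4\}$.
   Context: Partitions are drawn as Young diagrams $\mathbb{D}(\lambda)$ in English notation; $c_{i,j}$ is the cell in row $i$, column $j$. The hook length $h_\lambda(c)$ is the number of cells of $\mathbb{D}(\lambda)$ weakly right of $c$ in its row or weakly below $c$ in its column (counting $c$ once). For $\mu\subseteq\lambda$, an excited diagram of $\lambda/\mu$ is a subset of $\mathbb{D}(\lambda)$ obtained from $\mathbb{D}(\mu)$ by repeatedly replacing a cell $c_{i,j}\in D$ by $c_{i+1,j+1}$, allowed iff $c_{i+1,j+1}\in\mathbb{D}(\lambda)$ and none of $c_{i,j+1},c_{i+1,j},c_{i+1,j+1}$ lies in $D$; $\mathbb{E}(\lambda/\mu)$ is their set. A ribbon with $n$ cells is read from its lower-left to its upper-right cell, each successive cell directly right of or directly above the previous; it corresponds to the set of $i\in\{1,\ldots,n-1\}$ with cell $i$ directly below cell $i+1$. A descent set is a non-empty finite set $I$ of positive integers; $\lambda^I$ is the unique partition with $\lambda^I_1=\lambda^I_2$ such that the cells $c_{i,j}\in\mathbb{D}(\lambda^I)$ with fewer than three of $c_{i,j+1},c_{i+1,j},c_{i+1,j+1}$ in $\mathbb{D}(\lambda^I)$ form a ribbon corresponding to $I$; this ribbon is $\mathbb{D}(\lambda^I)\setminus\mathbb{D}(\mu^I)$ for a partition $\mu^I$.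 Let $s(I)=\lambda^I_1-1$. Naruse-Newton coefficients: every excited diagram of $\lambda^I/\mu^I$ meets row 1 in $\{c_{1,1},\ldots,c_{1,r}\}$, $0\le r\le s$; for $0\le j\le s(I)$, $C_j(I)=\sum_D\prod_{c\in D,\,c\notin\text{row }1}h_{\lambda^I}(c)$, summed over $D\in\mathbb{E}(\lambda^I/\mu^I)$ with exactly $s-j$ cells in row 1. A sequence $(x_k)_{k=0}^m$ is log-concave if $x_k^2\ge x_{k-1}x_{k+1}$ for all $0<k<m$. *)

(* Defs.v *)
From mathcomp Require Import all_boot.
Set Implicit Arguments. Unset Strict Implicit. Unset Printing Implicit Defensive.

(* Partitions are sequences of parts  lam = [:: lam_1; lam_2; ...]  (weakly
   decreasing; trailing zeros are harmless).  Cells are 1-indexed pairs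
   (row, column), c_{i,j}.  lam_i = nth 0 lam i.-1 (0 beyond the length). *)

Definition in_diag (lam : seq nat) (i j : nat) : bool :=
  [&& 1 <= i, 1 <= j & j <= nth 0 lam i.-1].

(* We work inside the finite type of cells 'I_N * 'I_N; N is taken large
   enough (see [bnd] below) that every cell of D(lam) is represented. *)
Definition diagram (N : nat) (lam : seq nat) : {set 'I_N * 'I_N} :=
  [set c : 'I_N * 'I_N | in_diag lam c.1 c.2].

Definition hook (N : nat) (lam : seq nat) (c : 'I_N * 'I_N) : nat :=
  #|[set d : 'I_N * 'I_N in @diagram N lam |
       ((d.1 == c.1) && (c.2 <= d.2)) || ((d.2 == c.2) && (c.1 <= d.1))]|.

Definition excite_step (N : nat) (lam : seq nat) (D D' : {set 'I_N * 'I_N}) : bool :=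
  [exists c in D, exists c' : 'I_N * 'I_N,
     [&& (c'.1 : nat) == c.1.+1, (c'.2 : nat) == c.2.+1, c' \in @diagram N lam,
         [forall d in D,
            ~~ [|| ((d.1 : nat) == c.1) && ((d.2 : nat) == c.2.+1),
                   ((d.1 : nat) == c.1.+1) && ((d.2 : nat) == c.2) | d == c']]
       & D' == c' |: (D :\ c)]].

Definition excited (N : nat) (lam mu : seq nat) (D : {set 'I_N * 'I_N}) : bool :=
  connect (@excite_step N lam) (@diagram N mu) D.

(* Descent sets: a non-empty finite set I = {i_1 < ... < i_k} of positive
   integers, represented by the strictly increasing list [:: i_1; ...; i_k].
   The ribbon has n = i_k + 1 cells; with i_0 := 0 and i_{k+1} := i_k + 1,
   row k+1-j (j = 0..k) of D(lam^I) contains ribbon cells i_j+1 .. i_{j+1},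
   in columns i_j - j + 1 .. i_{j+1} - j.  Hence
     lam^I_{k+1-j} = i_{j+1} - j      and      mu^I_{k+1-j} = i_j - j. *)
Definition desc_idx (I : seq nat) (j : nat) : nat :=
  if j == 0 then 0 else if j <= size I then nth 0 I j.-1 else (last 0 I).+1.

Definition lamI (I : seq nat) : seq nat :=
  let k := size I in
  [seq desc_idx I (k.+2 - r) - (k.+1 - r) | r <- iota 1 k.+1].

Definition muI (I : seq nat) : seq nat :=
  let k := size I in
  [seq desc_idx I (k.+1 - r) - (k.+1 - r) | r <- iota 1 k.+1].

Definition sI (I : seq nat) : nat := (head 0 (lamI I)).-1.

Definition bnd (lam : seq nat) : nat := (size lam + head 0 lam).+1.

Definition NN_coeff_gen (N : nat) (lam mu : seq nat) (s j : nat) : nat :=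
  \sum_(D : {set 'I_N * 'I_N} |
          @excited N lam mu D && (#|[set c : 'I_N * 'I_N in D | (c.1 : nat) == 1]| == s - j))
     \prod_(c in D | (c.1 : nat) != 1) @hook N lam c.

Definition NN_coeff (I : seq nat) (j : nat) : nat :=
  NN_coeff_gen (bnd (lamI I)) (lamI I) (muI I) (sI I) j.

Definition log_concave (x : nat -> nat) (m : nat) : Prop :=
  forall k, 0 < k -> k < m -> x k.-1 * x k.+1 <= x k ^ 2.

(* Main.v *)
Require Import Defs.
From mathcomp Require Import all_boot zify.
Set Implicit Arguments. Unset Strict Implicit. Unset Printing Implicit Defensive.

Lemma ordeqE N (x y : 'I_N) : (x == y) = (x == y :> nat).
Proof. by []. Qed.

Lemma card_ord_pred N (P : pred nat) : #|[set i : 'I_N | P i]| = count P (iota 0 N).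
Proof.
rewrite -sum1_card -sum1_count.
rewrite (eq_bigl (fun i : 'I_N => P i)); last by move=> i; rewrite inE.
by rewrite -(big_mkord P (fun _ => 1)) /index_iota subn0.
Qed.

Lemma count_rng lo hi N :
  count (fun j => (lo <= j) && (j <= hi)) (iota 0 N) = minn N hi.+1 - minn N lo.
Proof.
elim: N => [|N IH] //.
rewrite -addn1 iotaD count_cat IH /= add0n addn0.
case: (boolP ((lo <= N) && (N <= hi))) => H /=; lia.
Qed.

Lemma card_rng N lo hi : hi < N ->
  #|[set i : 'I_N | (lo <= i) && (i <= hi)]| = hi.+1 - lo.
Proof. move=> H; rewrite (card_ord_pred N (fun j => (lo <= j) && (j <= hi))) count_rng; lia. Qed.

Lemma cardX2 N (P Q : pred nat) :
  #|[set d : 'I_N * 'I_N | P d.1 && Q d.2]| =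
  #|[set i : 'I_N | P i]| * #|[set j : 'I_N | Q j]|.
Proof.
rewrite -cardsX; apply: eq_card => -[x y]; by rewrite !inE.
Qed.

Definition lamab (a b : nat) := [:: b.-1; b.-1; a].
Definition muab (a b : nat) := [:: b.-2; a.-1; 0].

Lemma hook3 N a b (c : 'I_N * 'I_N) : 3 < N -> b < N -> a < b ->
  c.1 = 3 :> nat -> 1 <= c.2 <= a -> hook (lamab a b) c = a.+1 - c.2.
Proof.
case: c => [c1 c2] /= HN HbN Hab H1 H2; rewrite /hook.
rewrite (@eq_card _ _ [set d : 'I_N * 'I_N | ((3 <= d.1) && (d.1 <= 3)) && ((c2 <= d.2) && (d.2 <= a))]).
  rewrite (cardX2 N (fun i => (3 <= i) && (i <= 3)) (fun j => (c2 <= j) && (j <= a))).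
  rewrite !card_rng; lia.
move=> [[x Hx] [y Hy]]; rewrite !inE /in_diag /= !ordeqE /= H1.
case: x Hx => [|[|[|[|x]]]] Hx /=; rewrite ?nth_nil; lia.
Qed.

Lemma hook2 N a b (c : 'I_N * 'I_N) : 3 < N -> b < N -> a < b ->
  c.1 = 2 :> nat -> 1 <= c.2 <= b.-1 -> hook (lamab a b) c = b - c.2 + (c.2 <= a).
Proof.
case: c => [c1 c2] /= HN HbN Hab H1 H2; rewrite /hook.
set A := [set d : 'I_N * 'I_N | ((2 <= d.1) && (d.1 <= 2)) && ((c2 <= d.2) && (d.2 <= b.-1))].
pose h := if c2 <= a then 3 else 2.
set B := [set d : 'I_N * 'I_N | ((3 <= d.1) && (d.1 <= h)) && ((c2 <= d.2) && (d.2 <= c2))].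
rewrite (@eq_card _ _ (A :|: B)).
  rewrite cardsU.
  have -> : A :&: B = set0 by apply/setP => d; rewrite !inE; lia.
  rewrite cards0 subn0 /A /B.
  rewrite (cardX2 N (fun i => (2 <= i) && (i <= 2)) (fun j => (c2 <= j) && (j <= b.-1))).
  rewrite (cardX2 N (fun i => (3 <= i) && (i <= h)) (fun j => (c2 <= j) && (j <= c2))).
  rewrite !card_rng /h; try lia; case: ifP => _; lia.
move=> [[x Hx] [y Hy]]; rewrite !inE /in_diag /= !ordeqE /= H1.
rewrite /h; case: ifP => Hc; case: x Hx => [|[|[|[|x]]]] Hx /=; rewrite ?nth_nil; lia.
Qed.

Lemma in_lamE a b i j : in_diag (lamab a b) i j =
  [|| (i == 1) && (1 <= j <= b.-1), (i == 2) && (1 <= j <= b.-1) | (i == 3) && (1 <= j <= a)].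
Proof. rewrite /in_diag; case: i => [|[|[|[|i]]]] /=; rewrite ?nth_nil; lia. Qed.

Lemma in_muE a b i j : in_diag (muab a b) i j =
  ((i == 1) && (1 <= j <= b.-2)) || ((i == 2) && (1 <= j <= a.-1)).
Proof. rewrite /in_diag; case: i => [|[|[|[|i]]]] /=; rewrite ?nth_nil; lia. Qed.

Definition inD (a b r t i j : nat) : bool :=
  [|| (i == 1) && (1 <= j <= r), (i == 2) && (r.+2 <= j <= b.-1),
      (i == 2) && (1 <= j <= t) | (i == 3) && (t.+2 <= j <= a)].

Definition Dset N a b r t : {set 'I_N * 'I_N} := [set c : 'I_N * 'I_N | inD a b r t c.1 c.2].

Definition valid (a b r t : nat) : bool := [&& t <= r, r <= b.-2 & t <= a.-1].

Lemma Dmu N a b : 0 < a < b -> diagram N (muab a b) = Dset N a b b.-2 a.-1.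
Proof.
move=> Hab; apply/setP => -[x y]; rewrite !inE /= in_muE /inD; timeout 20 lia.
Qed.

Lemma step_inv N a b r t (D' : {set 'I_N * 'I_N}) : 0 < a < b -> valid a b r t ->
  excite_step (lamab a b) (Dset N a b r t) D' ->
  exists r' t', valid a b r' t' /\ D' = Dset N a b r' t'.
Proof.
move=> Hab Hv /existsP [[c1 c2] /andP [Hc /existsP [[d1 d2] /and5P [E1 E2 Hc' Hblk /eqP ->]]]].
rewrite inE /= in Hc; rewrite inE /= in_lamE in Hc'; simpl in E1, E2.
move/forall_inP: Hblk => Hblk.
have K1 := Hblk (c1, d2); have K2 := Hblk (d1, c2).
rewrite !inE /= !xpair_eqE !ordeqE /= in K1 K2.
have K1' : ~~ inD a b r t c1 d2.
  by apply/negP => H; move: (K1 H); rewrite eqxx E2.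
have K2' : ~~ inD a b r t d1 c2.
  by apply/negP => H; move: (K2 H); rewrite eqxx E1 /= orbT.
clear K1 K2 Hblk.
move/eqP: E1 => E1; move/eqP: E2 => E2.
rewrite E2 in K1' Hc'; rewrite E1 in K2' Hc'.
move: Hv; rewrite /valid => Hv.
have [[F1 [F2 F3]]|[F1 [F2 F3]]] : (c1 = 1 :> nat /\ c2 = r :> nat /\ t < r) \/
      (c1 = 2 :> nat /\ c2 = t :> nat /\ 1 <= t).
  move: Hc K1' K2' Hc'; rewrite /inD.
  case/or4P => /and3P [/eqP H1 H2 H3]; rewrite H1 /=; timeout 20 lia.
- exists r.-1, t; split; first by rewrite /valid; timeout 20 lia.
  apply/setP => -[x y]; rewrite !inE /= !xpair_eqE !ordeqE /= E1 E2 F1 F2 /inD.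
  clear Hc K1' K2' Hc' E1 E2 F1 F2; move: (x : nat) (y : nat) => {}x {}y.
  case: (ltngtP x 2) => [|Hx|->]; last by timeout 20 lia.
    case: (ltngtP x 1) => [|Hx1|->]; timeout 20 lia.
  case: (ltngtP x 3) => [|Hx3|->]; timeout 20 lia.
- exists r, t.-1; split; first by rewrite /valid; timeout 20 lia.
  apply/setP => -[x y]; rewrite !inE /= !xpair_eqE !ordeqE /= E1 E2 F1 F2 /inD.
  have Hta : t < a by move: Hc'; rewrite F1 F2 /=; timeout 20 lia.
  clear Hc K1' K2' Hc' E1 E2 F1 F2; move: (x : nat) (y : nat) => {}x {}y.
  case: (ltngtP x 2) => [|Hx|->]; last by timeout 20 lia.
    case: (ltngtP x 1) => [|Hx1|->]; timeout 20 lia.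
  case: (ltngtP x 3) => [|Hx3|->]; timeout 20 lia.
Qed.

Lemma excited_inv N a b D : 0 < a < b ->
  excited (lamab a b) (muab a b) D -> exists r t, valid a b r t /\ D = Dset N a b r t.
Proof.
move=> Hab; rewrite /excited Dmu //; case/connectP => p Hp ->.
have : valid a b b.-2 a.-1 by rewrite /valid; lia.
move: Hp; move: b.-2 a.-1 => r0 t0.
elim: p r0 t0 => [|y p IH] r0 t0 /=; first by move=> _ Hv; exists r0, t0.
case/andP => Hs Hp Hv; have [r' [t' [Hv' E]]] := step_inv Hab Hv Hs.
by subst y; exact: IH.
Qed.

Lemma stepT N a b r t : 3 < N -> b < N -> 0 < a < b -> valid a b r t -> 0 < t ->
  excite_step (lamab a b) (Dset N a b r t) (Dset N a b r t.-1).
Proof.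
move=> HN HbN Hab Hv Ht; move: Hv; rewrite /valid => Hv.
have h2 : 2 < N by lia. have ht : t < N by lia.
have h3 : 3 < N by lia. have ht1 : t.+1 < N by lia.
apply/existsP; exists (Ordinal h2, Ordinal ht); rewrite inE /inD /=.
apply/andP; split; first by lia.
apply/existsP; exists (Ordinal h3, Ordinal ht1); apply/and5P; split => //.
- rewrite inE in_lamE /=; lia.
- apply/forall_inP => -[x y]; rewrite inE /= /inD !xpair_eqE !ordeqE /=.
  move: (x : nat) (y : nat) => {}x {}y; timeout 20 lia.
- apply/eqP/setP => -[x y]; rewrite !inE /= !xpair_eqE !ordeqE /= /inD.
  move: (x : nat) (y : nat) => {}x {}y.
  case: (ltngtP x 2) => [|Hx|->]; last by timeout 20 lia.
    case: (ltngtP x 1) => [|Hx1|->]; timeout 20 lia.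
  case: (ltngtP x 3) => [|Hx3|->]; timeout 20 lia.
Qed.

Lemma stepR N a b r t : 3 < N -> b < N -> 0 < a < b -> valid a b r t -> t < r ->
  excite_step (lamab a b) (Dset N a b r t) (Dset N a b r.-1 t).
Proof.
move=> HN HbN Hab Hv Ht; move: Hv; rewrite /valid => Hv.
have h1 : 1 < N by lia. have hr : r < N by lia.
have h2 : 2 < N by lia. have hr1 : r.+1 < N by lia.
apply/existsP; exists (Ordinal h1, Ordinal hr); rewrite inE /inD /=.
apply/andP; split; first by lia.
apply/existsP; exists (Ordinal h2, Ordinal hr1); apply/and5P; split => //.
- rewrite inE in_lamE /=; lia.
- apply/forall_inP => -[x y]; rewrite inE /= /inD !xpair_eqE !ordeqE /=.
  move: (x : nat) (y : nat) => {}x {}y; timeout 20 lia.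
- apply/eqP/setP => -[x y]; rewrite !inE /= !xpair_eqE !ordeqE /= /inD.
  move: (x : nat) (y : nat) => {}x {}y.
  case: (ltngtP x 2) => [|Hx|->]; last by timeout 20 lia.
    case: (ltngtP x 1) => [|Hx1|->]; timeout 20 lia.
  case: (ltngtP x 3) => [|Hx3|->]; timeout 20 lia.
Qed.

Lemma excited_Dset N a b r t : 3 < N -> b < N -> 0 < a < b -> valid a b r t ->
  excited (lamab a b) (muab a b) (Dset N a b r t).
Proof.
move=> HN HbN Hab Hv; rewrite /excited Dmu //.
have HT : forall d, d <= a.-1 -> connect (excite_step (lamab a b))
    (Dset N a b b.-2 a.-1) (Dset N a b b.-2 (a.-1 - d)).
  elim => [|d IH] Hd; first by rewrite subn0.
  apply: connect_trans (IH (ltnW Hd)) _; apply: connect1.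
  have -> : a.-1 - d.+1 = (a.-1 - d).-1 by lia.
  apply: stepT => //; rewrite /valid; lia.
have HR : forall d, d <= b.-2 - r -> connect (excite_step (lamab a b))
    (Dset N a b b.-2 a.-1) (Dset N a b (b.-2 - d) t).
  move: Hv; rewrite /valid => Hv.
  elim => [|d IH] Hd.
    have := HT (a.-1 - t); rewrite subn0; have -> : a.-1 - (a.-1 - t) = t by lia.
    apply; lia.
  apply: connect_trans (IH (ltnW Hd)) _; apply: connect1.
  have -> : b.-2 - d.+1 = (b.-2 - d).-1 by lia.
  apply: stepR => //; rewrite /valid; lia.
have := HR (b.-2 - r); move: Hv; rewrite /valid => Hv.
have -> : b.-2 - (b.-2 - r) = r by lia.
apply; lia.
Qed.

Definition W N a b r t :=
  \prod_(c in Dset N a b r t | (c.1 : nat) != 1) hook (lamab a b) c.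

Lemma rowcount N a b r t : 1 < N -> r < N ->
  #|[set c : 'I_N * 'I_N in Dset N a b r t | (c.1 : nat) == 1]| = r.
Proof.
move=> H1 Hr.
rewrite (@eq_card _ _ [set d : 'I_N * 'I_N | ((1 <= d.1) && (d.1 <= 1)) && ((1 <= d.2) && (d.2 <= r))]).
  rewrite (cardX2 N (fun i => (1 <= i) && (i <= 1)) (fun j => (1 <= j) && (j <= r))).
  rewrite !card_rng; lia.
move=> [x y]; rewrite !inE /= /inD; move: (x : nat) (y : nat) => {}x {}y.
case: (ltngtP x 1) => [|Hx1|->]; lia.
Qed.

Lemma Dset_inj N a b r t1 t2 : 0 < a < b -> t1 <= minn r a.-1 -> t2 <= minn r a.-1 ->
  b < N -> Dset N a b r t1 = Dset N a b r t2 -> t1 = t2.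
Proof.
move=> Hab H1 H2 HbN E.
have h2 : 2 < N by lia.
case: (ltngtP t1 t2) => // H.
- have ht : t2 < N by lia.
  move/setP/(_ (Ordinal h2, Ordinal ht)): E; rewrite !inE /= /inD; lia.
- have ht : t1 < N by lia.
  move/setP/(_ (Ordinal h2, Ordinal ht)): E; rewrite !inE /= /inD; lia.
Qed.

Lemma Cform N a b j : 3 < N -> b < N -> 0 < a < b -> j <= b.-2 ->
  NN_coeff_gen N (lamab a b) (muab a b) b.-2 j =
  \sum_(t < (minn (b.-2 - j) a.-1).+1) W N a b (b.-2 - j) t.
Proof.
move=> HN HbN Hab Hj.
set r := b.-2 - j. set m := minn r a.-1.
rewrite /NN_coeff_gen.
rewrite (eq_bigl (fun D => D \in (fun t : 'I_m.+1 => Dset N a b r t) @: [set: 'I_m.+1])); last first.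
  move=> D; apply/idP/imsetP.
  - case/andP => /(@excited_inv N a b D Hab) [r' [t' [Hv ->]]] /eqP Hc.
    move: Hv; rewrite /valid => Hv.
    rewrite rowcount in Hc; try lia.
    have Ht : t' < m.+1 by rewrite /m /r; lia.
    exists (Ordinal Ht); first by rewrite inE. by rewrite /= Hc.
  - case=> t _ ->; apply/andP; split.
      apply: excited_Dset => //; rewrite /valid; have := ltn_ord t; rewrite /m /r; lia.
    rewrite rowcount; rewrite /r; lia.
rewrite big_imset /=.
  by apply: eq_bigl => t; rewrite inE.
move=> t1 t2 _ _ E; apply: val_inj; apply: (Dset_inj Hab _ _ HbN E).
  by have := ltn_ord t1; rewrite /m; lia.
by have := ltn_ord t2; rewrite /m; lia.
Qed.

Lemma setT_eq N a b r t (h2 : 2 < N) (ht : t < N) (h3 : 3 < N) (ht1 : t.+1 < N) :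
  0 < a < b -> valid a b r t -> 0 < t ->
  Dset N a b r t.-1 = (Ordinal h3, Ordinal ht1) |: (Dset N a b r t :\ (Ordinal h2, Ordinal ht)).
Proof.
move=> Hab Hv Ht; move: Hv; rewrite /valid => Hv.
apply/setP => -[x y]; rewrite !inE /= !xpair_eqE !ordeqE /= /inD.
move: (x : nat) (y : nat) => {}x {}y.
case: (ltngtP x 2) => [|Hx|->]; last by timeout 20 lia.
  case: (ltngtP x 1) => [|Hx1|->]; timeout 20 lia.
case: (ltngtP x 3) => [|Hx3|->]; timeout 20 lia.
Qed.

Lemma setR_eq N a b r t (h1 : 1 < N) (hr : r < N) (h2 : 2 < N) (hr1 : r.+1 < N) :
  0 < a < b -> valid a b r t -> t < r ->
  Dset N a b r.-1 t = (Ordinal h2, Ordinal hr1) |: (Dset N a b r t :\ (Ordinal h1, Ordinal hr)).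
Proof.
move=> Hab Hv Ht; move: Hv; rewrite /valid => Hv.
apply/setP => -[x y]; rewrite !inE /= !xpair_eqE !ordeqE /= /inD.
move: (x : nat) (y : nat) => {}x {}y.
case: (ltngtP x 2) => [|Hx|->]; last by timeout 20 lia.
  case: (ltngtP x 1) => [|Hx1|->]; timeout 20 lia.
case: (ltngtP x 3) => [|Hx3|->]; timeout 20 lia.
Qed.

Definition Fw N a b (c : 'I_N * 'I_N) := if (c.1 : nat) != 1 then hook (lamab a b) c else 1.

Lemma W_mkcond N a b r t : W N a b r t = \prod_(c in Dset N a b r t) Fw a b c.
Proof. by rewrite /W big_mkcondr. Qed.

Lemma WR N a b r t : 3 < N -> b < N -> 0 < a < b -> valid a b r t -> t < r ->
  W N a b r.-1 t = (b - r.+1 + (r.+1 <= a)) * W N a b r t.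
Proof.
move=> HN HbN Hab Hv Ht; have Hv' := Hv; move: Hv'; rewrite /valid => Hv'.
have h1 : 1 < N by lia. have hr : r < N by lia.
have h2 : 2 < N by lia. have hr1 : r.+1 < N by lia.
rewrite !W_mkcond (setR_eq h1 hr h2 hr1 Hab Hv Ht).
rewrite big_setU1 /=; last by rewrite !inE /inD /=; lia.
rewrite [in RHS](big_setD1 (Ordinal h1, Ordinal hr)); last first.
  by rewrite inE /= /inD; lia.
rewrite /Fw /= mul1n (@hook2 N a b (Ordinal h2, Ordinal hr1)) //=; lia.
Qed.

Lemma WT N a b r t : 3 < N -> b < N -> 0 < a < b -> valid a b r t -> 0 < t ->
  W N a b r t.-1 * (b - t + 1) = W N a b r t * (a - t).
Proof.
move=> HN HbN Hab Hv Ht; have Hv' := Hv; move: Hv'; rewrite /valid => Hv'.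
have h2 : 2 < N by lia. have ht : t < N by lia.
have h3 : 3 < N by lia. have ht1 : t.+1 < N by lia.
rewrite !W_mkcond (setT_eq h2 ht h3 ht1 Hab Hv Ht).
rewrite big_setU1 /=; last by rewrite !inE /inD /=; lia.
rewrite [in RHS](big_setD1 (Ordinal h2, Ordinal ht)); last first.
  by rewrite inE /= /inD; lia.
rewrite /Fw /= (@hook2 N a b (Ordinal h2, Ordinal ht)) //=; try lia.
rewrite (@hook3 N a b (Ordinal h3, Ordinal ht1)) //=; try lia.
have -> : t <= a by lia.
have -> : a.+1 - t.+1 = a - t by lia.
set P := \prod_(i in _) _. change (b - t + true) with (b - t + 1). move: (a - t) (b - t + 1) P => x y p. by rewrite mulnAC [RHS]mulnAC (mulnC x).
Qed.

Lemma hook_gt0 N a b (c : 'I_N * 'I_N) : c \in diagram N (lamab a b) -> 0 < hook (lamab a b) c.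
Proof. by move=> Hc; apply/card_gt0P; exists c; rewrite inE Hc eqxx leqnn. Qed.

Lemma W_gt0 N a b r t : valid a b r t -> 0 < a < b -> 0 < W N a b r t.
Proof.
move=> Hv Hab; rewrite /W; elim/big_ind: _ => //.
  by move=> x y; rewrite muln_gt0 => -> ->.
move=> c /andP [Hc _]; apply: hook_gt0; move: Hc; rewrite !inE in_lamE /inD.
move: Hv; rewrite /valid; lia.
Qed.

Lemma Csum N a b j r m : 3 < N -> b < N -> 0 < a < b -> j <= b.-2 ->
  b.-2 - j = r -> minn r a.-1 = m ->
  NN_coeff_gen N (lamab a b) (muab a b) b.-2 j = \sum_(t < m.+1) W N a b r t.
Proof. by move=> HN HbN Hab Hj <- <-; apply: Cform. Qed.

Lemma WR' N a b r r' t k : 3 < N -> b < N -> 0 < a < b -> valid a b r t -> t < r ->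
  b - r.+1 + (r.+1 <= a) = k -> r.-1 = r' -> W N a b r' t = k * W N a b r t.
Proof. by move=> HN HbN Hab Hv Ht <- <-; apply: WR. Qed.

Lemma WT' N a b r t t' k l : 3 < N -> b < N -> 0 < a < b -> valid a b r t -> 0 < t ->
  b - t + 1 = k -> a - t = l -> t.-1 = t' -> W N a b r t' * k = W N a b r t * l.
Proof. by move=> HN HbN Hab Hv Ht <- <- <-; apply: WT. Qed.

Lemma sum_scale n (F G : nat -> nat) k :
  (forall t, t < n -> F t = k * G t) -> \sum_(t < n) F t = k * \sum_(t < n) G t.
Proof. by move=> H; rewrite big_distrr; apply: eq_bigr => t _; apply: H. Qed.

Lemma caseC N n : 3 < N -> n.+4 < N ->
  let C := NN_coeff_gen N (lamab n.+3 n.+4) (muab n.+3 n.+4) (n.+4).-2 in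
  C 1 ^ 2 < C 0 * C 2.
Proof.
move=> HN HbN; set C := NN_coeff_gen _ _ _ _; cbv zeta.
have Hab : 0 < n.+3 < n.+4 by lia.
set G := W N n.+3 n.+4 n.+2.
have E0 : C 0 = \sum_(t < n.+3) G t by apply: Csum; lia.
have E1 : C 1 = 2 * \sum_(t < n.+2) G t.
  rewrite /C (Csum (r := n.+1) (m := n.+1)) //; try lia.
  apply: sum_scale => t Ht; apply: WR' => //; try lia; rewrite /valid; lia.
have E2 : C 2 = 6 * \sum_(t < n.+1) G t.
  rewrite /C (Csum (r := n) (m := n)) //; try lia.
  apply: sum_scale => t Ht.
  rewrite (WR' (r := n.+1) (r' := n) (k := 3)) //; try lia; last by rewrite /valid; lia.
  rewrite (WR' (r := n.+2) (r' := n.+1) (k := 2)) //; try lia; last by rewrite /valid; lia.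
  by rewrite mulnA.
have R1 : G n.+1 * 3 = G n.+2 * 1.
  apply: WT' => //; try lia; rewrite /valid; lia.
have R2 : G n * 4 = G n.+1 * 2.
  apply: WT' => //; try lia; rewrite /valid; lia.
have Gp : 0 < G n by apply: W_gt0 => //; rewrite /valid; lia.
rewrite E0 E1 E2 !big_ord_recr /=.
set X := \sum_(i < n) _.
nia.
Qed.

Lemma caseB N n : 3 < N -> n.+3.+2 < N ->
  let C := NN_coeff_gen N (lamab n.+3 n.+3.+2) (muab n.+3 n.+3.+2) (n.+3.+2).-2 in
  C 2 ^ 2 < C 1 * C 3.
Proof.
move=> HN HbN; set C := NN_coeff_gen _ _ _ _; cbv zeta.
have Hab : 0 < n.+3 < n.+3.+2 by lia.
set G := W N n.+3 n.+3.+2 n.+2.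
have E1 : C 1 = \sum_(t < n.+3) G t by apply: Csum; lia.
have E2 : C 2 = 3 * \sum_(t < n.+2) G t.
  rewrite /C (Csum (r := n.+1) (m := n.+1)) //; try lia.
  apply: sum_scale => t Ht; apply: WR' => //; try lia; rewrite /valid; lia.
have E3 : C 3 = 12 * \sum_(t < n.+1) G t.
  rewrite /C (Csum (r := n) (m := n)) //; try lia.
  apply: sum_scale => t Ht.
  rewrite (WR' (r := n.+1) (r' := n) (k := 4)) //; try lia; last by rewrite /valid; lia.
  rewrite (WR' (r := n.+2) (r' := n.+1) (k := 3)) //; try lia; last by rewrite /valid; lia.
  by rewrite mulnA.
have R1 : G n.+1 * 4 = G n.+2 * 1.
  apply: WT' => //; try lia; rewrite /valid; lia.
have R2 : G n * 5 = G n.+1 * 2.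
  apply: WT' => //; try lia; rewrite /valid; lia.
have Gp : 0 < G n by apply: W_gt0 => //; rewrite /valid; lia.
rewrite E1 E2 E3 !big_ord_recr /=.
set X := \sum_(i < n) _.
nia.
Qed.

Lemma caseA N p c : 3 < N -> c.+4 < N -> p <= c ->
  let C := NN_coeff_gen N (lamab p.+1 c.+4) (muab p.+1 c.+4) (c.+4).-2 in
  C 1 ^ 2 < C 0 * C 2.
Proof.
move=> HN HbN Hac; set C := NN_coeff_gen _ _ _ _; cbv zeta.
have Hab : 0 < p.+1 < c.+4 by lia.
set G := W N p.+1 c.+4 c.+2.
have E0 : C 0 = \sum_(t < p.+1) G t by apply: Csum; lia.
have E1 : C 1 = 1 * \sum_(t < p.+1) G t.
  rewrite /C (Csum (r := c.+1) (m := p)) //; try lia.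
  apply: sum_scale => t Ht; apply: WR' => //; try lia; rewrite /valid; lia.
have E2 : C 2 = 2 * \sum_(t < p.+1) G t.
  rewrite /C (Csum (r := c) (m := p)) //; try lia.
  apply: sum_scale => t Ht.
  rewrite (WR' (r := c.+1) (r' := c) (k := 2)) //; try lia; last by rewrite /valid; lia.
  rewrite (WR' (r := c.+2) (r' := c.+1) (k := 1)) //; try lia; last by rewrite /valid; lia.
  by rewrite mul1n.
have Gp : 0 < G 0 by apply: W_gt0 => //; rewrite /valid; lia.
rewrite E0 E1 E2 big_ord_recl /=.
set X := \sum_(i < p) _.
nia.
Qed.

Lemma case24 N : 3 < N -> 4 < N ->
  let C := NN_coeff_gen N (lamab 2 4) (muab 2 4) (4).-2 in
  C 0 * C 2 <= C 1 ^ 2.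
Proof.
move=> HN HbN; set C := NN_coeff_gen _ _ _ _; cbv zeta.
have Hab : 0 < 2 < 4 by lia.
set G := W N 2 4 2.
have E0 : C 0 = \sum_(t < 2) G t by apply: Csum; lia.
have E1 : C 1 = 1 * \sum_(t < 2) G t.
  rewrite /C (Csum (r := 1) (m := 1)) //; try lia.
  apply: sum_scale => t Ht; apply: WR' => //; try lia; rewrite /valid; lia.
have E2 : C 2 = 3 * \sum_(t < 1) G t.
  rewrite /C (Csum (r := 0) (m := 0)) //; try lia.
  apply: sum_scale => t Ht.
  rewrite (WR' (r := 1) (r' := 0) (k := 3)) //; try lia; last by rewrite /valid; lia.
  rewrite (WR' (r := 2) (r' := 1) (k := 1)) //; try lia; last by rewrite /valid; lia.
  by rewrite mul1n.
have R1 : G 0 * 4 = G 1 * 1.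
  apply: WT' => //; try lia; rewrite /valid; lia.
rewrite E0 E1 E2 !big_ord_recr !big_ord0 /=.
nia.
Qed.

Lemma lamI_ab a b : 0 < b -> lamI [:: a; b] = lamab a b.
Proof. move=> Hb; rewrite /lamI /lamab /desc_idx /=; congr [:: _; _; _]; lia. Qed.

Lemma muI_ab a b : muI [:: a; b] = muab a b.
Proof. rewrite /muI /muab /desc_idx /=; congr [:: _; _; _]; lia. Qed.

Lemma sI_ab a b : 0 < b -> sI [:: a; b] = b.-2.
Proof. by move=> Hb; rewrite /sI lamI_ab //= /lamab. Qed.

Theorem corollary6p4 (a b : nat) :
  0 < a -> a < b ->
  (log_concave (NN_coeff [:: a; b]) (sI [:: a; b]) <->
   [\/ (a = 1 /\ b = 2), (a = 1 /\ b = 3), (a = 2 /\ b = 3) | (a = 2 /\ b = 4)]).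
Proof.
move=> Ha Hab.
have Hb : 0 < b by lia.
have EN : forall j, NN_coeff [:: a; b] j =
    NN_coeff_gen (bnd (lamab a b)) (lamab a b) (muab a b) b.-2 j.
  by move=> j; rewrite /NN_coeff lamI_ab // muI_ab sI_ab.
rewrite sI_ab // /log_concave.
have HN : 3 < bnd (lamab a b) by rewrite /bnd /lamab /=; lia.
have HbN : b < bnd (lamab a b) by rewrite /bnd /lamab /=; lia.
split.
- move=> LC.
  case: (ltngtP b a.+1) => [Hb1|Hb1|Hb1]; first by lia.
  + case: (ltngtP b a.+2) => [Hb2|Hb2|Hb2]; first by lia.
    * have [p Ep] : exists p, a = p.+1 by exists a.-1; lia.
      have [c Ec] : exists c, b = c.+4 by exists (b - 4); lia.
      subst a b; exfalso.
      have := LC 1 isT (ltac:(lia)); rewrite !EN /=.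
      move=> H2; have := @caseA _ p c HN HbN (ltac:(lia)); move=> /= H1; lia.
    * subst b; case: (leqP a 2) => Ha2.
        by case: a Ha Ha2 {LC EN HN HbN Hab Hb Hb1} => [|[|[|a]]] //= _ _; [constructor 2|constructor 4].
      have [n En] : exists n, a = n.+3 by exists (a - 3); lia.
      subst a; exfalso.
      have := LC 2 isT (ltac:(lia)); rewrite !EN /=.
      move=> H2; have := @caseB _ n HN HbN; move=> /= H1; lia.
  + subst b; case: (leqP a 2) => Ha2.
      by case: a Ha Ha2 {LC EN HN HbN Hab Hb} => [|[|[|a]]] //= _ _; [constructor 1|constructor 3].
    have [n En] : exists n, a = n.+3 by exists (a - 3); lia.
    subst a; exfalso.
    have := LC 1 isT (ltac:(lia)); rewrite !EN /=.
    move=> H2; have := @caseC _ n HN HbN; move=> /= H1; lia.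
- case=> -[Ea Eb] k Hk Hks; subst a b; try (simpl in Hks; lia).
  have Ek : k = 1 by simpl in Hks; lia.
  subst k; rewrite !EN /=.
  exact: (case24 HN HbN).
Qed.
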